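(* There is an absolute constant $C$ such that for all integers $m$ and all integers $n>\sqrt{|m|}$ (with $n\ge3$, so that the expression is defined), $$N_{\mathrm{root}}(4m;-n)\le C\, n(\log n)(\log\log n)^2 .$$ That is, $N_{\mathrm{root}}(4m;-n)=O(n\log n(\log\log n)^2)$ uniformly for $n>\sqrt{|m|}$, with implied constant independent of $m$.
   Context: $Q_{\mathcal D}(a,b,c,d)=2(a^2+b^2+c^2+d^2)-(a+b+c+d)^2$. For a quadruple $\mathbf v$, $|\mathbf v|$ is the sum of absolute values of its coordinates. $\mathbf S_i$ ($i=1,\dots,4$) is the integer matrix replacing the $i$-th coordinate $a_i$ of a quadruple by $2\sum_{j\ne i}a_j-a_i$, other coordinates fixed. An integer quadruple is reduced if no $\mathbf S_i$ strictly decreases $|\cdot|$; a reduced quadruple ordered as $a\le b\le c\le d$ with $a+b+c+d\ge0$ is a root quadruple if $a+b+c\ge d>0$. $N_{\mathrm{root}}(4m;-n)$ is the number of ordered integer root quadruples $(a,b,c,d)$, $a\le b\le c\le d$, with $a+b+c+d>0$, $Q_{\mathcal D}(a,b,c,d)=4m$ and $a=-n$. *)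

(* Defs.v *)
From Stdlib Require Import ZArith Reals List.
Open Scope Z_scope.

Record quad := Quad { q1 : Z; q2 : Z; q3 : Z; q4 : Z }.

Definition QD (v : quad) : Z :=
  let '(Quad a b c d) := v in
  2 * (a*a + b*b + c*c + d*d) - (a+b+c+d)*(a+b+c+d).

Definition qnorm (v : quad) : Z :=
  let '(Quad a b c d) := v in Z.abs a + Z.abs b + Z.abs c + Z.abs d.

Definition S1 (v : quad) : quad :=
  let '(Quad a b c d) := v in Quad (2*(b+c+d) - a) b c d.
Definition S2 (v : quad) : quad :=
  let '(Quad a b c d) := v in Quad a (2*(a+c+d) - b) c d.
Definition S3 (v : quad) : quad :=
  let '(Quad a b c d) := v in Quad a b (2*(a+b+d) - c) d.
Definition S4 (v : quad) : quad :=
  let '(Quad a b c d) := v in Quad a b c (2*(a+b+c) - d).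

Definition reduced (v : quad) : Prop :=
  qnorm v <= qnorm (S1 v) /\ qnorm v <= qnorm (S2 v) /\
  qnorm v <= qnorm (S3 v) /\ qnorm v <= qnorm (S4 v).

Definition root_quad (v : quad) : Prop :=
  let '(Quad a b c d) := v in
  reduced v /\ a <= b /\ b <= c /\ c <= d /\ 0 <= a+b+c+d /\
  d <= a+b+c /\ 0 < d.

(* The quadruples counted by N_root(4m; -n). *)
Definition counted_root (m n : Z) (v : quad) : Prop :=
  let '(Quad a b c d) := v in
  root_quad v /\ 0 < a+b+c+d /\ QD v = 4*m /\ a = -n.

(* Main.v *)
Require Import Defs.
From Stdlib Require Import ZArith Reals List Lia Psatz Lra.
From mathcomp Require Import ssreflect ssrfun ssrbool eqtype ssrnat seq div prime binomial bigop path.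
From mathcomp Require Import zify.
From mathcomp Require cyclic fintype.
Open Scope nat_scope.

Lemma sum_harm_dyadic l Y : \sum_(1 <= a < 2 ^ l) Y %/ a <= l * Y.
Proof.
elim: l => [|l IH]; first by rewrite expn0 big_geq.
rewrite (@big_cat_nat _ _ _ (2 ^ l)) //=; last by rewrite expnS; lia.
  2: by rewrite expn_gt0.
have H2 : \sum_(2 ^ l <= a < 2 ^ l.+1) Y %/ a <= Y.
  apply: (@leq_trans (\sum_(2 ^ l <= a < 2 ^ l.+1) Y %/ 2 ^ l)).
    rewrite big_nat_cond [X in _ <= X]big_nat_cond.
    apply: leq_sum => a /andP[/andP[h1 _] _].
    by apply: leq_div2l => //; rewrite expn_gt0.
  rewrite sum_nat_const_nat expnS.
  have -> : 2 * 2 ^ l - 2 ^ l = 2 ^ l by lia.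
  by rewrite mulnC leq_divM.
rewrite mulSn addnC; exact: leq_add.
Qed.

Lemma sum_harm l Y : Y < 2 ^ l -> \sum_(a <- iota 1 Y) Y %/ a <= Y * l.
Proof.
move=> hY.
have -> : \sum_(a <- iota 1 Y) Y %/ a = \sum_(1 <= a < Y.+1) Y %/ a.
  by rewrite /index_iota subn1.
apply: leq_trans (_ : \sum_(1 <= a < 2 ^ l) Y %/ a <= _); last first.
  by rewrite mulnC sum_harm_dyadic.
rewrite [X in _ <= X](@big_cat_nat _ _ _ Y.+1) //=; exact: leq_addr.
Qed.

Lemma sum_sub_uniq (s t : seq nat) (f : nat -> nat) :
  uniq s -> uniq t -> {subset s <= t} -> \sum_(i <- s) f i <= \sum_(i <- t) f i.
Proof.
move=> us ut st.
rewrite [X in _ <= X](bigID (fun i => i \in s)) /=.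
have -> : \sum_(i <- t | i \in s) f i = \sum_(i <- s) f i.
  rewrite -big_filter; apply: perm_big; apply: uniq_perm => //.
    exact: filter_uniq.
  move=> i; rewrite mem_filter; apply/andP/idP => [[]//|h]; split => //.
  exact: st.
exact: leq_addr.
Qed.

Lemma totient_count n : totient n = count (coprime n) (iota 0 n).
Proof.
rewrite totient_count_coprime -sum1_count [RHS]big_mkcond /=.
by rewrite /index_iota subn0; apply: eq_bigr => i _; case: (coprime n i).
Qed.

Lemma totient_div F g : 0 < F -> g %| F -> totient F <= g * totient (F %/ g).
Proof.
move=> F0 gF.
set h := F %/ g.
have Fhg : F = h * g by rewrite /h divnK.
have h0 : 0 < h by move: F0; rewrite Fhg; lia.
have g0 : 0 < g by move: F0; rewrite Fhg; lia.
rewrite !totient_count.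
have -> : g * count (coprime h) (iota 0 h) =
   size [seq (r, q) | r <- [seq r <- iota 0 h | coprime h r], q <- iota 0 g].
  by rewrite size_allpairs size_filter size_iota mulnC.
rewrite -size_filter -(size_map (fun i => (i %% h, i %/ h))).
apply: uniq_leq_size.
  rewrite map_inj_in_uniq ?filter_uniq ?iota_uniq //.
  move=> i j _ _ [H1 H2]; by rewrite (divn_eq i h) (divn_eq j h) H1 H2.
move=> z /mapP[i]; rewrite mem_filter mem_iota => /andP[ci /andP[_ iF]] ->.
apply/allpairsP; exists (i %% h, i %/ h); split => //.
  rewrite mem_filter mem_iota coprime_modr ltn_pmod //= andbT.
  apply: coprime_dvdl ci; by rewrite Fhg dvdn_mulr.
by rewrite mem_iota /= ltn_divLR // mulnC -Fhg.
Qed.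


Lemma sum_totient_divisors F : 0 < F -> \sum_(d <- divisors F) totient d = F.
Proof.
move=> F0.
rewrite -{2}(cyclic.sum_totient_dvd F) -(big_mkord (fun d => d %| F) totient).
have Hp : perm_eq (divisors F) [seq d <- index_iota 0 F.+1 | d %| F].
  apply: uniq_perm.
  - exact: divisors_uniq.
  - by rewrite filter_uniq // iota_uniq.
  move=> d; rewrite mem_filter mem_iota -dvdn_divisors //.
  apply/idP/andP => [h|[]//]; split => //=.
  by rewrite ltnS dvdn_leq.
by rewrite [RHS]big_mkcond -big_mkcond -[RHS]big_filter (perm_big _ Hp).
Qed.

Lemma sum_totient_div F : 0 < F -> \sum_(g <- divisors F) totient (F %/ g) = F.
Proof.
move=> F0.
have Hp : perm_eq [seq F %/ g | g <- divisors F] (divisors F).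
  apply: uniq_perm; last first.
  - move=> h; apply/mapP/idP => [[g gF ->]|hF].
      rewrite -dvdn_divisors // in gF; rewrite -dvdn_divisors //; exact: dvdn_div.
    rewrite -dvdn_divisors // in hF.
    exists (F %/ h); first by rewrite -dvdn_divisors // dvdn_div.
    by rewrite divnA // mulKn.
  - exact: divisors_uniq.
  rewrite map_inj_in_uniq ?divisors_uniq // => g g' gF g'F H.
  rewrite -!dvdn_divisors // in gF g'F.
  have g0 : 0 < g by apply: dvdn_gt0 gF.
  have g'0 : 0 < g' by apply: dvdn_gt0 g'F.
  have := divnK gF; have := divnK g'F; rewrite H => e1 e2.
  have q0 : 0 < F %/ g' by rewrite divn_gt0 // dvdn_leq.
  by apply/eqP; rewrite -(eqn_pmul2l q0) e2 e1.
by rewrite -(big_map (fun g => F %/ g) xpredT totient) (perm_big _ Hp) sum_totient_divisors.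
Qed.

Definition Tgt F X := [seq (g, t) | g <- [seq g <- iota 1 X | g * g %| F],
   t <- [seq (a, u) | a <- iota 1 (X %/ (g * g)),
         u <- [seq (b, q) | b <- iota 1 (X %/ (g * g * a)), q <- iota 0 g]]].

Lemma size_Tgt_sum F X l : 0 < F -> X < 2 ^ l ->
  size (Tgt F X) <= \sum_(g <- divisors F) (X %/ g) * l.
Proof.
move=> F0 Xl.
rewrite /Tgt size_allpairs_dep sumnE big_map.
apply: leq_trans (_ : \sum_(g <- [seq g <- iota 1 X | g * g %| F]) (X %/ g) * l <= _).
  apply: leq_sum => g _.
  rewrite size_allpairs_dep sumnE big_map.
  set Y := X %/ (g * g).
  have -> : \sum_(a <- iota 1 Y) size [seq (b, q) | b <- iota 1 (X %/ (g * g * a)), q <- iota 0 g]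
          = g * \sum_(a <- iota 1 Y) Y %/ a.
    rewrite big_distrr /=; apply: eq_bigr => a _.
    by rewrite size_allpairs !size_iota mulnC /Y divnMA.
  have YX : Y < 2 ^ l by apply: leq_ltn_trans Xl; rewrite /Y leq_div.
  apply: leq_trans (_ : g * (Y * l) <= _); first by rewrite leq_mul2l sum_harm ?orbT.
  rewrite mulnA leq_mul2r; apply/orP; right.
  by rewrite /Y divnMA mulnC leq_divM.
apply: sum_sub_uniq; rewrite ?filter_uniq ?iota_uniq ?divisors_uniq //.
move=> g; rewrite mem_filter -dvdn_divisors // => /andP[h _].
by apply: dvdn_trans h; apply: dvdn_mulr.
Qed.

Lemma size_Tgt F X l : 0 < F -> X < 2 ^ l ->
  size (Tgt F X) * totient F <= X * l * F.
Proof.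
move=> F0 Xl.
apply: leq_trans (_ : (\sum_(g <- divisors F) (X %/ g) * l) * totient F <= _).
  by rewrite leq_mul2r size_Tgt_sum ?orbT.
have -> : X * l * F = \sum_(g <- divisors F) X * l * totient (F %/ g).
  by rewrite -big_distrr /= sum_totient_div.
rewrite big_distrl /=.
rewrite big_seq [X in _ <= X]big_seq; apply: leq_sum => g.
rewrite -dvdn_divisors // => gF.
apply: leq_trans (_ : X %/ g * l * (g * totient (F %/ g)) <= _).
  by rewrite leq_mul2l totient_div ?orbT.
have -> : X %/ g * l * (g * totient (F %/ g)) = (X %/ g * g) * l * totient (F %/ g) by lia.
by rewrite leq_mul2r leq_mul2r leq_divM ?orbT.
Qed.

Definition Pp (s : seq nat) := \prod_(p <- s) p.
Definition Pm (s : seq nat) := \prod_(p <- s) p.-1.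

Lemma F_decomp F : 0 < F -> F = \prod_(p <- primes F) p ^ logn p F.
Proof.
move=> F0; rewrite {1}(@prod_prime_decomp F F0) prime_decompE big_map //.
Qed.

Lemma totient_prod F : 0 < F -> F * Pm (primes F) = totient F * Pp (primes F).
Proof.
move=> F0.
rewrite totientE // /Pp /Pm {1}(@F_decomp F F0) -!big_split /=.
rewrite big_seq [RHS]big_seq; apply: eq_bigr => p.
rewrite -logn_gt0 => h.
by rewrite -mulnA -expnSr prednK // mulnC.
Qed.

Lemma Pp_le F : 0 < F -> Pp (primes F) <= F.
Proof.
move=> F0; rewrite {2}(@F_decomp F F0) /Pp big_seq [X in _ <= X]big_seq.
apply: leq_prod => p; rewrite -logn_gt0 => h.
rewrite -{1}(expn1 p) leq_pexp2l //.
move: h; rewrite logn_gt0 mem_primes => /andP[/prime_gt0 //].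
Qed.

Lemma prod_sub (s t : seq nat) (f : nat -> nat) :
  uniq s -> uniq t -> {subset s <= t} -> \prod_(i <- t | i \in s) f i = \prod_(i <- s) f i.
Proof.
move=> us ut st.
rewrite -big_filter; apply: perm_big; apply: uniq_perm => //.
  exact: filter_uniq.
move=> i; rewrite mem_filter; apply/andP/idP => [[]//|h]; split => //.
exact: st.
Qed.

Lemma ratio_sub (s t : seq nat) :
  uniq s -> uniq t -> {subset s <= t} -> Pp s * Pm t <= Pp t * Pm s.
Proof.
move=> us ut st.
rewrite /Pp /Pm [\prod_(i <- t) i](bigID (fun i => i \in s)) [\prod_(i <- t) i.-1](bigID (fun i => i \in s)) /=.
rewrite !prod_sub //.
have -> : \prod_(i <- s) i * (\prod_(i <- s) i.-1 * \prod_(i <- t | i \notin s) i.-1)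
   = (\prod_(i <- s) i * \prod_(i <- s) i.-1) * \prod_(i <- t | i \notin s) i.-1 by rewrite mulnA.
have -> : \prod_(i <- s) i * \prod_(i <- t | i \notin s) i * \prod_(i <- s) i.-1
   = (\prod_(i <- s) i * \prod_(i <- s) i.-1) * \prod_(i <- t | i \notin s) i by rewrite mulnAC.
rewrite leq_mul2l; apply/orP; right.
apply: leq_prod => i _; exact: leq_pred.
Qed.

Lemma ratio_big (s : seq nat) N : all (fun p => N < p) s ->
  Pp s * N ^ size s <= (N.+1) ^ size s * Pm s /\ N ^ size s <= Pp s.
Proof.
elim: s => [|p s IH] /=; first by rewrite /Pp /Pm !big_nil.
case/andP => hp /IH [H1 H2].
rewrite /Pp /Pm !big_cons -/(Pp s) -/(Pm s) !expnS; split.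
  have h1 : p * N <= N.+1 * p.-1 by nia.
  have -> : p * Pp s * (N * N ^ size s) = (p * N) * (Pp s * N ^ size s) by lia.
  have -> : N.+1 * N.+1 ^ size s * (p.-1 * Pm s) = (N.+1 * p.-1) * (N.+1 ^ size s * Pm s) by lia.
  exact: leq_mul.
by apply: leq_mul => //; exact: ltnW.
Qed.

Lemma bin_le2 n k : 'C(n, k) <= 2 ^ n.
Proof.
elim: n k => [|n IH] [|k] //.
  by rewrite bin0 expn_gt0.
by rewrite binS expnS mul2n -addnn leq_add.
Qed.

Lemma fact_ndvd p N : prime p -> N < p -> ~~ (p %| N`!).
Proof.
move=> pp; elim: N => [|N IH] h.
  by rewrite fact0 dvdn1; apply/negP => /eqP p1; rewrite p1 in pp.
rewrite factS Euclid_dvdM // negb_or IH ?andbT; last by apply: ltnW.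
apply/negP => /(dvdn_leq (ltn0Sn N)); lia.
Qed.

Lemma p_dvd_bin p N : prime p -> N < p -> p <= N.*2 -> p %| 'C(N.*2, N).
Proof.
move=> pp h1 h2.
have : p %| N.*2`! by apply: dvdn_fact; rewrite prime_gt0.
have hN : N <= N.*2 by rewrite -addnn leq_addr.
rewrite -(bin_fact hN).
have -> : N.*2 - N = N by rewrite -addnn addnK.
rewrite Euclid_dvdM // Euclid_dvdM // (negbTE (@fact_ndvd p N pp h1)) /=.
by rewrite orbF.
Qed.

Lemma coprime_Pp p s : prime p -> all prime s -> p \notin s -> coprime p (Pp s).
Proof.
move=> pp; elim: s => [|q s IH] /=; first by rewrite /Pp big_nil coprimen1.
case/andP => qp ps; rewrite inE negb_or => /andP[pq ns].
rewrite /Pp big_cons -/(Pp s) coprimeMr IH // andbT.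
by rewrite prime_coprime // dvdn_prime2.
Qed.

Lemma Pp_dvd (s : seq nat) m : uniq s -> all prime s -> (forall p, p \in s -> p %| m) -> Pp s %| m.
Proof.
elim: s => [|p s IH] /=; first by rewrite /Pp big_nil dvd1n.
case/andP => ns us /andP[pp ps] H.
rewrite /Pp big_cons -/(Pp s) Gauss_dvd ?coprime_Pp // H ?inE ?eqxx //=.
apply: IH => // q qs; apply: H; by rewrite inE qs orbT.
Qed.

Definition Mid N := [seq p <- iota N.+1 N | prime p].

Lemma Mid_bound J : 0 < J -> Pp (Mid (2 ^ J)) <= 2 ^ (2 ^ J).*2 /\ J * size (Mid (2 ^ J)) <= (2 ^ J).*2.
Proof.
move=> J0; set N := 2 ^ J.
have H1 : Pp (Mid N) <= 2 ^ N.*2.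
  apply: leq_trans (bin_le2 N.*2 N).
  apply: dvdn_leq; first by rewrite bin_gt0 -addnn leq_addr.
  apply: Pp_dvd; rewrite ?filter_uniq ?iota_uniq //.
    by apply/allP => p; rewrite mem_filter => /andP[].
  move=> p; rewrite mem_filter mem_iota => /andP[pp /andP[h1 h2]].
  apply: p_dvd_bin => //; rewrite -addnn; lia.
split => //.
have Hall : all (fun p => N < p) (Mid N).
  by apply/allP => p; rewrite mem_filter mem_iota => /andP[_ /andP[]].
have [_ H2] := @ratio_big (Mid N) N Hall.
rewrite -(@leq_exp2l 2) // expnM -/N.
exact: leq_trans H2 H1.
Qed.

Lemma INR_mul m n : INR (m * n) = (INR m * INR n)%R.
Proof. by rewrite -mult_INR. Qed.
Lemma INR_exp m n : INR (m ^ n) = (INR m ^ n)%R.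
Proof. rewrite -pow_INR; f_equal; elim: n => [|n IH] //=; by rewrite expnS IH. Qed.
Lemma INR_le m n : m <= n -> (INR m <= INR n)%R.
Proof. move=> h; apply: le_INR; lia. Qed.

Definition Sp J := [seq p <- iota 0 (2 ^ J).+1 | prime p].

Lemma Sp_succ J : Sp J.+1 = Sp J ++ Mid (2 ^ J).
Proof.
rewrite /Sp /Mid -filter_cat; congr filter.
have -> : (2 ^ J.+1).+1 = (2 ^ J).+1 + 2 ^ J by rewrite expnS; lia.
by rewrite iotaD.
Qed.

Lemma Pp_cat s t : Pp (s ++ t) = Pp s * Pp t.
Proof. by rewrite /Pp big_cat. Qed.
Lemma Pm_cat s t : Pm (s ++ t) = Pm s * Pm t.
Proof. by rewrite /Pm big_cat. Qed.

Lemma Pm_pos s : all prime s -> 0 < Pm s.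
Proof.
elim: s => [|p s IH] /=; first by rewrite /Pm big_nil.
case/andP => pp ps; rewrite /Pm big_cons -/(Pm s) muln_gt0 IH // andbT.
by have := prime_gt1 pp; lia.
Qed.

Lemma pow_exp_le (x : R) k : (0 <= x)%R -> ((1 + x) ^ k <= exp (INR k * x))%R.
Proof.
move=> x0; elim: k => [|k IH]; first by rewrite /= Rmult_0_l exp_0; lra.
rewrite S_INR Rmult_plus_distr_r Rmult_1_l exp_plus /= [X in (_ <= X)%R]Rmult_comm.
have := exp_ineq1_le x => h.
apply Rmult_le_compat; [lra | apply pow_le; lra | exact h | exact IH].
Qed.

Lemma exp_mono (x y : R) : (x <= y)%R -> (exp x <= exp y)%R.
Proof. case => h; [left; exact: exp_increasing | by rewrite h; right]. Qed.

Lemma exp_step (J : R) : (1 <= J)%R -> (J ^ 2 * exp (2 / (J + 1)) <= (J + 1) ^ 2)%R.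
Proof.
move=> hJ.
have h1 := exp_ineq1_le (- / (J + 1)).
rewrite exp_Ropp in h1.
have e0 := exp_pos (/ (J + 1)).
have h2 : (J * exp (/ (J + 1)) <= J + 1)%R.
  have hJ1 : (0 < J + 1)%R by lra.
  have : (1 + - / (J + 1) = J / (J + 1))%R by field; lra.
  move=> eq; rewrite eq in h1.
  apply (Rmult_le_reg_r (/ exp (/ (J + 1)))); first by apply: Rinv_0_lt_compat.
  rewrite Rmult_assoc Rinv_r; last by lra.
  apply (Rmult_le_reg_r (/ (J + 1))); first by apply: Rinv_0_lt_compat.
  have -> : ((J + 1) * / exp (/ (J + 1)) * / (J + 1) = / exp (/ (J + 1)))%R by field; lra.
  lra.
have -> : (2 / (J + 1) = / (J + 1) + / (J + 1))%R by field; lra.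
rewrite exp_plus.
have h3 : (0 <= J * exp (/ (J + 1)))%R by apply: Rmult_le_pos; lra.
have -> : (J ^ 2 * (exp (/ (J + 1)) * exp (/ (J + 1))) = (J * exp (/ (J + 1))) ^ 2)%R by ring.
apply: pow_incr; lra.
Qed.

Lemma Sp_bound J : 0 < J ->
  (INR (Pp (Sp J)) * exp (2 / INR J) <= 2 * exp 2 * INR J ^ 2 * INR (Pm (Sp J)))%R.
Proof.
elim: J => [//|J IH] _.
case: (posnP J) => [->|J0].
  have -> : Sp 1 = [:: 2] by [].
  rewrite /Pp /Pm !big_cons !big_nil /=.
  replace (2 / 1)%R with 2%R by field. have := exp_pos 2; lra.
have {}IH := IH J0.
set N := 2 ^ J.
have allM : all prime (Mid N) by apply/allP => p; rewrite mem_filter => /andP[].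
have allS : all prime (Sp J) by apply/allP => p; rewrite mem_filter => /andP[].
have HallN : all (fun p => N < p) (Mid N).
  by apply/allP => p; rewrite mem_filter mem_iota => /andP[_ /andP[]].
have [H1 _] := @ratio_big (Mid N) N HallN.
have [_ H2] := @Mid_bound J J0.
set k := size (Mid N) in H1 H2.
have N0 : 0 < N by rewrite expn_gt0.
rewrite Sp_succ Pp_cat Pm_cat !INR_mul.
have rN : (0 < INR N)%R by apply: lt_0_INR; lia.
have rJ : (1 <= INR J)%R by apply: (le_INR 1); lia.
have HM : (INR (Pp (Mid N)) <= exp (2 / INR J) * INR (Pm (Mid N)))%R.
  have A := @INR_le _ _ H1; rewrite !INR_mul (INR_exp N k) (INR_exp N.+1 k) in A.
  have B : ((1 + / INR N) ^ k <= exp (2 / INR J))%R.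
    eapply Rle_trans; first (apply pow_exp_le; left; apply: Rinv_0_lt_compat; lra).
    apply: exp_mono.
    have H2' := @INR_le _ _ H2; rewrite INR_mul -/N -mul2n INR_mul /= in H2'.
    apply (Rmult_le_reg_r (INR N * INR J)); first by apply: Rmult_lt_0_compat; lra.
    have -> : (INR k * / INR N * (INR N * INR J) = INR J * INR k)%R by field; lra.
    have -> : (2 / INR J * (INR N * INR J) = 2 * INR N)%R by field; lra.
    lra.
  have C : (INR N.+1 ^ k = INR N ^ k * (1 + / INR N) ^ k)%R.
    rewrite -Rpow_mult_distr S_INR; f_equal; field; lra.
  rewrite C in A.
  have D : (0 < INR N ^ k)%R by apply: pow_lt.
  have E0 : (0 <= INR (Pm (Mid N)))%R by apply: pos_INR.
  apply (Rmult_le_reg_r (INR N ^ k)) => //.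
  apply: Rle_trans A _.
  have F0 : (0 <= (1 + / INR N) ^ k)%R by apply: pow_le; have := Rinv_0_lt_compat _ rN; lra.
  have : ((1 + / INR N) ^ k * INR (Pm (Mid N)) <= exp (2 / INR J) * INR (Pm (Mid N)))%R.
    by apply: Rmult_le_compat_r.
  nra.
have HS := @exp_step (INR J) rJ.
have a0 : (0 <= INR (Pp (Sp J)))%R by apply: pos_INR.
have b0 : (0 <= INR (Pp (Mid N)))%R by apply: pos_INR.
have c0 : (0 <= INR (Pm (Sp J)))%R by apply: pos_INR.
have d0 : (0 <= INR (Pm (Mid N)))%R by apply: pos_INR.
have eJ := exp_pos (2 / INR J).
have eJ1 := exp_pos (2 / INR J.+1).
have step1 : (INR (Pp (Sp J)) * INR (Pp (Mid N)) <= 2 * exp 2 * INR J ^ 2 * INR (Pm (Sp J)) * INR (Pm (Mid N)))%R.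
  apply: Rle_trans (_ : INR (Pp (Sp J)) * (exp (2 / INR J) * INR (Pm (Mid N))) <= _)%R.
    by apply: Rmult_le_compat_l.
  rewrite -Rmult_assoc; by apply: Rmult_le_compat_r.
rewrite S_INR.
have e2 := exp_pos 2.
have : (INR (Pp (Sp J)) * INR (Pp (Mid N)) * exp (2 / (INR J + 1)) <=
   2 * exp 2 * INR (Pm (Sp J)) * INR (Pm (Mid N)) * (INR J ^ 2 * exp (2 / (INR J + 1))))%R.
  have -> : (2 * exp 2 * INR (Pm (Sp J)) * INR (Pm (Mid N)) * (INR J ^ 2 * exp (2 / (INR J + 1))) =
     (2 * exp 2 * INR J ^ 2 * INR (Pm (Sp J)) * INR (Pm (Mid N))) * exp (2 / (INR J + 1)))%R by ring.
  apply: Rmult_le_compat_r => //; by rewrite -S_INR; lra.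
have pc : (0 <= 2 * exp 2 * INR (Pm (Sp J)) * INR (Pm (Mid N)))%R.
  repeat apply: Rmult_le_pos; lra.
move=> h; apply: Rle_trans h _.
have -> : (2 * exp 2 * (INR J + 1) ^ 2 * (INR (Pm (Sp J)) * INR (Pm (Mid N))) =
   2 * exp 2 * INR (Pm (Sp J)) * INR (Pm (Mid N)) * (INR J + 1) ^ 2)%R by ring.
by apply: Rmult_le_compat_l.
Qed.

Lemma Pp_pos s : all prime s -> 0 < Pp s.
Proof.
elim: s => [|p s IH] /=; first by rewrite /Pp big_nil.
case/andP => pp ps; rewrite /Pp big_cons -/(Pp s) muln_gt0 IH // andbT.
exact: prime_gt0.
Qed.

Lemma prime_ratio F J : 0 < F -> 0 < J -> F < 2 ^ (2 ^ J) ->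
  (INR (Pp (primes F)) <= 2 * exp 2 * exp 1 * INR J ^ 2 * INR (Pm (primes F)))%R.
Proof.
move=> F0 J0 FJ.
set N := 2 ^ J in FJ.
set Q := primes F.
set Qs := [seq p <- Q | p <= N].
set Ql := [seq p <- Q | ~~ (p <= N)].
have allQ : all prime Q by exact: all_prime_primes.
have allQs : all prime Qs by apply/allP => p; rewrite mem_filter => /andP[_ /(allP allQ)].
have allQl : all prime Ql by apply/allP => p; rewrite mem_filter => /andP[_ /(allP allQ)].
have splitP : Pp Q = Pp Qs * Pp Ql by rewrite /Pp (bigID (fun p => p <= N)) /= !big_filter.
have splitM : Pm Q = Pm Qs * Pm Ql by rewrite /Pm (bigID (fun p => p <= N)) /= !big_filter.
have Hs : (INR (Pp Qs) <= 2 * exp 2 * INR J ^ 2 * INR (Pm Qs))%R.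
  have sub : {subset Qs <= Sp J}.
    move=> p; rewrite !mem_filter mem_iota => /andP[pN].
    rewrite mem_primes => /andP[pp _].
    by rewrite pp /= ltnS pN.
  have us : uniq Qs by rewrite filter_uniq // primes_uniq.
  have uS : uniq (Sp J) by rewrite filter_uniq // iota_uniq.
  have R1 := @ratio_sub Qs (Sp J) us uS sub.
  have R2 := @INR_le _ _ R1; rewrite !INR_mul in R2.
  have S1 := @Sp_bound J J0.
  have e1 : (1 <= exp (2 / INR J))%R.
    have := exp_ineq1_le (2 / INR J).
    have : (0 <= 2 / INR J)%R by apply: Rmult_le_pos; [lra | left; apply: Rinv_0_lt_compat; apply: lt_0_INR; lia].
    lra.
  have pS : (0 < INR (Pm (Sp J)))%R.
    apply: lt_0_INR; apply/ltP; apply: Pm_pos; apply/allP => p; rewrite mem_filter => /andP[] //.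
  have a0 : (0 <= INR (Pp (Sp J)))%R by apply: pos_INR.
  have S2 : (INR (Pp (Sp J)) <= 2 * exp 2 * INR J ^ 2 * INR (Pm (Sp J)))%R.
    apply: Rle_trans S1; rewrite -{1}(Rmult_1_r (INR (Pp (Sp J)))).
    by apply: Rmult_le_compat_l.
  apply (Rmult_le_reg_r (INR (Pm (Sp J)))) => //.
  apply: Rle_trans R2 _.
  have b0 : (0 <= INR (Pm Qs))%R by apply: pos_INR.
  have -> : (2 * exp 2 * INR J ^ 2 * INR (Pm Qs) * INR (Pm (Sp J)) =
     (2 * exp 2 * INR J ^ 2 * INR (Pm (Sp J))) * INR (Pm Qs))%R by ring.
  by apply: Rmult_le_compat_r.
have Hl : (INR (Pp Ql) <= exp 1 * INR (Pm Ql))%R.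
  have HallN : all (fun p => N < p) Ql.
    by apply/allP => p; rewrite mem_filter ltnNge => /andP[].
  have [H1 H2] := @ratio_big Ql N HallN.
  set r := size Ql in H1 H2.
  have N2 : 2 <= N by rewrite /N -{1}(expn1 2) leq_pexp2l.
  have rN : r < N.
    have : 2 ^ r < 2 ^ N.
      have h1 : 2 ^ r <= N ^ r by case: (r) => [|r']; rewrite ?expn0 // leq_exp2r.
      apply: leq_ltn_trans h1 _.
      apply: leq_ltn_trans H2 _; apply: leq_ltn_trans FJ.
      apply: leq_trans (@Pp_le F F0).
      by rewrite -/Q splitP leq_pmull // Pp_pos.
    by rewrite ltn_exp2l.
  have rN' : (0 < INR N)%R by apply: lt_0_INR; lia.
  have A := @INR_le _ _ H1; rewrite !INR_mul (INR_exp N r) (INR_exp N.+1 r) in A.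
  have B : ((1 + / INR N) ^ r <= exp 1)%R.
    eapply Rle_trans; first (apply pow_exp_le; left; apply: Rinv_0_lt_compat; lra).
    apply: exp_mono.
    have := @INR_le r N (ltnW rN).
    move=> h; apply (Rmult_le_reg_r (INR N)) => //.
    have -> : (INR r * / INR N * INR N = INR r)%R by field; lra.
    lra.
  have C : (INR N.+1 ^ r = INR N ^ r * (1 + / INR N) ^ r)%R.
    rewrite -Rpow_mult_distr S_INR; f_equal; field; lra.
  rewrite C in A.
  have D : (0 < INR N ^ r)%R by apply: pow_lt.
  have E0 : (0 <= INR (Pm Ql))%R by apply: pos_INR.
  apply (Rmult_le_reg_r (INR N ^ r)) => //.
  apply: Rle_trans A _.
  have F1 : (0 <= (1 + / INR N) ^ r)%R by apply: pow_le; have := Rinv_0_lt_compat _ rN'; lra.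
  have : ((1 + / INR N) ^ r * INR (Pm Ql) <= exp 1 * INR (Pm Ql))%R.
    by apply: Rmult_le_compat_r.
  nra.
rewrite splitP splitM !INR_mul.
have -> : (2 * exp 2 * exp 1 * INR J ^ 2 * (INR (Pm Qs) * INR (Pm Ql)) =
  (2 * exp 2 * INR J ^ 2 * INR (Pm Qs)) * (exp 1 * INR (Pm Ql)))%R by ring.
apply: Rmult_le_compat => //; apply: pos_INR.
Qed.

Lemma Tgt_mem F X g a b q x k : x = g * g * a * b -> 0 < g -> 0 < a -> 0 < b ->
  x <= X -> g * g %| F -> k < x -> q = k %/ (x %/ g) -> (g, (a, (b, q))) \in Tgt F X.
Proof.
move=> xe g0 a0 b0 xX gF kx ->.
have xg : x %/ g = g * a * b by rewrite xe -!mulnA mulKn.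
apply/allpairsPdep; exists g, (a, (b, k %/ (x %/ g))); split => //.
  rewrite mem_filter gF mem_iota /=; apply/andP; split => //.
  have : g <= x by rewrite xe; nia. lia.
apply/allpairsPdep; exists a, (b, k %/ (x %/ g)); split => //.
  rewrite mem_iota a0 /= ltnS leq_divRL ?muln_gt0 ?g0 //; nia.
apply/allpairsPdep; exists b, (k %/ (x %/ g)); split => //.
  rewrite mem_iota b0 /= ltnS leq_divRL ?muln_gt0 ?g0 ?a0 //; nia.
rewrite mem_iota /= ltn_divLR; first by rewrite xg; nia.
by rewrite xg !muln_gt0 g0 a0 b0.
Qed.

Lemma arith_xe x d e g a b : x = d * e -> d = a * g -> e = b * g -> x = g * g * a * b.
Proof. move=> -> -> ->; lia. Qed.
Lemma arith_a0 d a g : 0 < d -> d = a * g -> 0 < a.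
Proof. move=> h e; move: h; rewrite e; lia. Qed.
Lemma arith_b0 x g a b : 0 < x -> x = g * g * a * b -> 0 < b.
Proof. move=> h e; move: h; rewrite e; lia. Qed.

Section Core.
Variable E : nat.

Definition dist (a b : nat) := (a - b) + (b - a).

Lemma dist_sym a b : dist a b = dist b a.
Proof. rewrite /dist; lia. Qed.

Lemma dvd_dist_mod d a b : d %| dist a b -> a %% d = b %% d.
Proof.
rewrite /dist; case: (leqP b a) => h.
  have -> : b - a = 0 by lia. rewrite addn0 => H.
  by apply/eqP; rewrite eqn_mod_dvd.
have -> : a - b = 0 by lia. rewrite add0n => H.
by apply/esym/eqP; rewrite eqn_mod_dvd // ltnW.
Qed.

Lemma mod_dvd_dist d a b : a %% d = b %% d -> d %| dist a b.
Proof.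
rewrite /dist; case: (leqP b a) => h H.
  have -> : b - a = 0 by lia. rewrite addn0.
  by rewrite -eqn_mod_dvd // H.
have -> : a - b = 0 by lia. rewrite add0n.
by rewrite -eqn_mod_dvd ?(ltnW h) // H.
Qed.

Lemma key_e x k k0 : 0 < x -> x %| k^2 + E -> x %| k0^2 + E ->
  (x %/ gcdn x (dist k k0)) %| k + k0.
Proof.
move=> x0.
wlog le : k k0 / k0 <= k.
  move=> W H1 H2; case: (leqP k0 k) => h; first by apply: W.
  rewrite dist_sym addnC; apply: W => //; exact: ltnW.
move=> H1 H2.
have Hd : x %| (k - k0) * (k + k0).
  rewrite -subn_sqr.
  have -> : k ^ 2 - k0 ^ 2 = (k^2 + E) - (k0^2 + E) by lia.
  exact: dvdn_sub.
have -> : dist k k0 = k - k0 by rewrite /dist; lia.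
set u := k - k0 in Hd *.
set d := gcdn x u.
have d0 : 0 < d by rewrite gcdn_gt0 x0.
have [e xe] : exists e, x = e * d by apply/dvdnP; exact: dvdn_gcdl.
have [u' ue] : exists u', u = u' * d by apply/dvdnP; exact: dvdn_gcdr.
have -> : x %/ d = e by rewrite xe mulnK.
have cop : coprime e u'.
  rewrite /coprime; apply/eqP.
  have : gcdn x u = d by [].
  rewrite xe ue -muln_gcdl => /eqP.
  by rewrite -{2}(mul1n d) eqn_pmul2r // => /eqP.
have : e * d %| u' * (k + k0) * d.
  by rewrite -xe mulnAC -ue.
rewrite dvdn_pmul2r // Gauss_dvdr //.
Qed.


Definition roots_list x := [seq j <- iota 0 x | x %| j^2 + E].
Definition k0f x := head 0 (roots_list x).

Lemma k0f_root x k : k < x -> x %| k^2 + E -> k0f x < x /\ x %| (k0f x)^2 + E.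
Proof.
move=> kx H.
have : k \in roots_list x by rewrite mem_filter H mem_iota.
rewrite /k0f; case Hr: (roots_list x) => [|h t] //= _.
have : h \in roots_list x by rewrite Hr inE eqxx.
by rewrite mem_filter mem_iota => /andP[-> /andP[_ ->]].
Qed.

Definition dd x k := gcdn x (dist k (k0f x)).
Definition ee x k := x %/ dd x k.
Definition gg x k := gcdn (dd x k) (ee x k).

Definition Tmap (p : nat * nat) : nat * (nat * (nat * nat)) :=
  let x := p.1 in let k := p.2 in
  (gg x k, (dd x k %/ gg x k, (ee x k %/ gg x k, k %/ (x %/ gg x k)))).

Definition isroot (p : nat * nat) := [&& 0 < p.1, p.2 < p.1 & p.1 %| p.2^2 + E].

Lemma Tfacts x k : isroot (x, k) ->
  [/\ 0 < dd x k, x = dd x k * ee x k, ee x k %| k + k0f x, dd x k %| dist k (k0f x) &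
   [/\ 0 < gg x k, dd x k = (dd x k %/ gg x k) * gg x k,
       ee x k = (ee x k %/ gg x k) * gg x k, gg x k * gg x k %| 4 * E & k0f x < x]].
Proof.
case/and3P => /= x0 kx Hk.
have [k0x Hk0] := @k0f_root x k kx Hk.
rewrite /gg /ee /dd.
set k0 := k0f x.
set d := gcdn x (dist k k0).
set e := x %/ d.
set g := gcdn d e.
have d0 : 0 < d by rewrite gcdn_gt0 x0.
have xde : x = d * e by rewrite /e mulnC divnK // dvdn_gcdl.
have He : e %| k + k0 by exact: key_e.
have Hdd : d %| dist k k0 by exact: dvdn_gcdr.
have g0 : 0 < g by rewrite gcdn_gt0 d0.
have dg : d = (d %/ g) * g by rewrite divnK // dvdn_gcdl.
have eg : e = (e %/ g) * g by rewrite divnK // dvdn_gcdr.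
split => //; split => //.
have g2 : g %| 2 * k0.
  have gd : g %| dist k k0 := dvdn_trans (dvdn_gcdl d e) Hdd.
  have ge : g %| k + k0 := dvdn_trans (dvdn_gcdr d e) He.
  move: gd; rewrite /dist; case: (leqP k0 k) => h.
    have -> : k0 - k = 0 by clear -h; lia. rewrite addn0 => gd.
    have -> : 2 * k0 = (k + k0) - (k - k0) by clear -h; lia.
    exact: dvdn_sub.
  have -> : k - k0 = 0 by clear -h; lia. rewrite add0n => gd.
  have -> : 2 * k0 = (k + k0) + (k0 - k) by clear -h; lia.
  by rewrite dvdn_addr.
have gx : g * g %| x.
  by rewrite xde dvdn_mul // ?dvdn_gcdl ?dvdn_gcdr.
have g4 : g * g %| 4 * (k0^2 + E) := dvdn_mull _ (dvdn_trans gx Hk0).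
have g4k : g * g %| 4 * k0^2.
  have -> : 4 * k0^2 = (2 * k0) * (2 * k0) by clear; lia.
  exact: dvdn_mul.
by move: g4; rewrite mulnDr dvdn_addr.
Qed.

Lemma Tmap_in x k X : isroot (x, k) -> x <= X -> Tmap (x, k) \in Tgt (4 * E) X.
Proof.
move=> R xX; have [d0 xde He Hd [g0 dg eg g4 k0x]] := @Tfacts x k R.
move: R => /and3P[/= x0 kx _].
rewrite /Tmap /=.
apply: (@Tgt_mem _ _ _ _ _ _ x k) => //.
- exact: (@arith_xe _ _ _ _ _ _ xde dg eg).
- exact: (@arith_a0 _ _ _ d0 dg).
- exact: (@arith_b0 _ _ _ _ x0 (@arith_xe _ _ _ _ _ _ xde dg eg)).
Qed.

Lemma Tmap_inj : {in isroot &, injective Tmap}.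
Proof.
move=> [x k] [x' k'] R R'.
have [d0 xde He Hd [g0 dg eg g4 k0x]] := @Tfacts x k R.
have [d0' xde' He' Hd' [g0' dg' eg' g4' k0x']] := @Tfacts x' k' R'.
move: R R'; rewrite !unfold_in => /and3P[/= x0 kx _] /and3P[/= x0' kx' _].
rewrite /Tmap /= => [[G A B Q]].
have xx : x = x'.
  by rewrite (@arith_xe _ _ _ _ _ _ xde dg eg) (@arith_xe _ _ _ _ _ _ xde' dg' eg') A B G.
subst x'.
have dd' : dd x k = dd x k' by rewrite dg dg' A G.
have ee' : ee x k = ee x k' by rewrite eg eg' B G.
rewrite -dd' in Hd'; rewrite -ee' in He'.
set L := x %/ gg x k.
have Lpos : 0 < L.
  rewrite /L divn_gt0 //; apply: dvdn_leq => //.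
  exact: dvdn_trans (dvdn_gcdl (dd x k) (ee x k)) (dvdn_gcdl x _).
have HL : L %| dist k k'.
  have -> : L = lcmn (dd x k) (ee x k).
    apply/eqP; rewrite -(eqn_pmul2r g0) /L divnK.
      by rewrite muln_lcm_gcd -xde.
    exact: dvdn_trans (dvdn_gcdl (dd x k) (ee x k)) (dvdn_gcdl x _).
  rewrite dvdn_lcm; apply/andP; split.
    apply: mod_dvd_dist.
    by rewrite (@dvd_dist_mod _ _ _ Hd) (@dvd_dist_mod _ _ _ Hd').
  apply: mod_dvd_dist; apply/eqP.
  rewrite -(eqn_modDr (k0f x)).
  move: He He'; rewrite /dvdn => /eqP -> /eqP -> //.
have Hm := @dvd_dist_mod _ _ _ HL.
rewrite (divn_eq k L) (divn_eq k' L) Hm.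
by rewrite /L Q G.
Qed.

End Core.

Lemma count_bound E L X l : 0 < E -> uniq L -> all (isroot E) L ->
  all (fun p => p.1 <= X) L -> X < 2 ^ l -> size L * totient (4 * E) <= X * l * (4 * E).
Proof.
move=> E0 uL rL xL Xl.
apply: leq_trans (_ : size (Tgt (4 * E) X) * totient (4 * E) <= _); last first.
  by apply: size_Tgt => //; rewrite muln_gt0.
rewrite leq_mul2r; apply/orP; right.
rewrite -(size_map (Tmap E)); apply: uniq_leq_size.
  rewrite map_inj_in_uniq // => u v uL' vL'; apply: (@Tmap_inj E).
    by rewrite unfold_in; apply: (allP rL).
  by rewrite unfold_in; apply: (allP rL).
move=> z /mapP[[x k] pL ->]; apply: Tmap_in.
  exact: (allP rL).
exact: (allP xL _ pL).
Qed.

Lemma count_real E L X l J : 0 < E -> uniq L -> all (isroot E) L ->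
  all (fun p => p.1 <= X) L -> X < 2 ^ l -> 0 < J -> 4 * E < 2 ^ (2 ^ J) ->
  (INR (size L) <= INR X * INR l * (2 * exp 2 * exp 1 * INR J ^ 2))%R.
Proof.
move=> E0 uL rL xL Xl J0 FJ.
set F := 4 * E in FJ.
have F0 : 0 < F by rewrite muln_gt0.
have H1 := @count_bound E L X l E0 uL rL xL Xl.
have H2 := @totient_prod F F0.
have phi0 : 0 < totient F by rewrite totient_gt0.
have pm0 : 0 < Pm (primes F) by apply: Pm_pos; exact: all_prime_primes.
have H3 : size L * Pm (primes F) <= X * l * Pp (primes F).
  rewrite -(leq_pmul2r phi0).
  have -> : X * l * Pp (primes F) * totient F = X * l * (totient F * Pp (primes F)) by lia.
  rewrite -H2.
  have -> : size L * Pm (primes F) * totient F = (size L * totient F) * Pm (primes F) by lia.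
  have -> : X * l * (F * Pm (primes F)) = (X * l * F) * Pm (primes F) by lia.
  by rewrite leq_mul2r H1 orbT.
have H4 := @prime_ratio F J F0 J0 FJ.
have R3 := @INR_le _ _ H3; rewrite !INR_mul in R3.
have pmr : (0 < INR (Pm (primes F)))%R by apply: lt_0_INR; apply/ltP.
have xl0 : (0 <= INR X * INR l)%R by apply: Rmult_le_pos; apply: pos_INR.
apply (Rmult_le_reg_r (INR (Pm (primes F)))) => //.
apply: Rle_trans R3 _.
have -> : (INR X * INR l * (2 * exp 2 * exp 1 * INR J ^ 2) * INR (Pm (primes F)) =
   INR X * INR l * (2 * exp 2 * exp 1 * INR J ^ 2 * INR (Pm (primes F))))%R by ring.
by apply: Rmult_le_compat_l.
Qed.

Lemma quad_facts (m n : Z) (v : quad) : counted_root m n v -> (Z.abs m < n * n)%Z ->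
  let x := (q2 v - n)%Z in let y := (q3 v - n)%Z in
  let k := ((q2 v + q3 v - n - q4 v) / 2)%Z in
  [/\ (0 <= k)%Z, (2 * k <= x)%Z, (x <= y)%Z, (2 * k = q2 v + q3 v - n - q4 v)%Z &
      (x * y = k * k + (n * n - m))%Z].
Proof.
case: v => a b c d [[Hred [ab [bc [cd [s0 [dabc d0]]]]]] [_ [HQ an]]] hm.
change (2 * (a*a + b*b + c*c + d*d) - (a+b+c+d)*(a+b+c+d) = 4 * m)%Z in HQ.
cbn [q2 q3 q4].
subst a.
set t := (b + c - n - d)%Z.
have t0 : (0 <= t)%Z by rewrite /t; lia.
have hx : (t <= b - n)%Z by rewrite /t; lia.
have key : (4 * ((b - n) * (c - n)) = t * t + 4 * (n * n - m))%Z by rewrite /t; nia.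
have [q [r [tq r01]]] : exists q r, t = (2 * q + r)%Z /\ (r = 0 \/ r = 1)%Z.
  exists (t / 2)%Z, (t mod 2)%Z; split; first by apply: Z.div_mod.
  have := Z.mod_pos_bound t 2; lia.
have r0 : r = 0%Z.
  case: r01 => // r1; subst r; exfalso.
  have : (4 * ((b - n) * (c - n) - q * q - q - n * n + m) = 1)%Z by rewrite tq in key; nia.
  lia.
subst r.
have tk : (t / 2 = q)%Z by rewrite tq Z.add_0_r Z.mul_comm Z.div_mul.
rewrite tk; split; try lia.
Qed.

Definition fq (n : Z) (v : quad) : nat * nat :=
  (Z.to_nat (q2 v - n), Z.to_nat ((q2 v + q3 v - n - q4 v) / 2)).

Lemma fq_root (m n : Z) v : counted_root m n v -> (Z.abs m < n * n)%Z -> (0 < n)%Z ->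
  isroot (Z.to_nat (n * n - m)) (fq n v) /\ (fq n v).1 <= 2 * Z.to_nat n.
Proof.
move=> C hm n0.
have [k0 kx xy tk key] := @quad_facts m n v C hm.
move: k0 kx xy tk key.
set x := (q2 v - n)%Z. set y := (q3 v - n)%Z. set k := ((q2 v + q3 v - n - q4 v) / 2)%Z.
move=> k0 kx xy _ key.
have E0 : (0 < n * n - m)%Z by lia.
have x1 : (1 <= x)%Z.
  case: (Z.le_gt_cases 1 x) => // h.
  have : x = 0%Z by lia.
  move=> x0; rewrite x0 in key; nia.
have xn : (x < 2 * n)%Z.
  have h1 : (x * x <= x * y)%Z by nia.
  have h2 : (4 * (k * k) <= x * x)%Z by nia.
  nia.
rewrite /fq /= -/x -/k.
split; last by lia.
apply/and3P; split => /=; try lia.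
apply/dvdnP; exists (Z.to_nat y).
apply: Nat2Z.inj.
rewrite Nat2Z.inj_add Nat2Z.inj_mul Nat2Z.inj_mul !Z2Nat.id; lia.
Qed.

Lemma fq_inj (m n : Z) u v : counted_root m n u -> counted_root m n v ->
  (Z.abs m < n * n)%Z -> (0 < n)%Z -> fq n u = fq n v -> u = v.
Proof.
move=> Cu Cv hm n0 H.
have [k0 kx xy tk key] := @quad_facts m n u Cu hm.
have [k0' kx' xy' tk' key'] := @quad_facts m n v Cv hm.
move: Cu Cv H k0 kx xy tk key k0' kx' xy' tk' key'.
case: u => a b c d; case: v => a' b' c' d'; cbn [q1 q2 q3 q4 fq].
move=> [_ [_ [_ au]]] [_ [_ [_ av]]] H k0 kx xy tk key k0' kx' xy' tk' key'.
move: H; rewrite /fq /= => [[H1 H2]].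
have e1 : (b - n = b' - n)%Z.
  have x1 : (0 <= b - n)%Z by lia.
  have x2 : (0 <= b' - n)%Z by lia.
  by rewrite -(Z2Nat.id _ x1) -(Z2Nat.id _ x2) H1.
have e2 : ((b + c - n - d) / 2 = (b' + c' - n - d') / 2)%Z.
  by rewrite -(Z2Nat.id _ k0) -(Z2Nat.id _ k0') H2.
have E0 : (0 < n * n - m)%Z by lia.
have x1 : (1 <= b - n)%Z.
  case: (Z.le_gt_cases 1 (b - n)) => // h.
  have x0 : (b - n = 0)%Z by lia.
  rewrite x0 in key; nia.
have e3 : c = c'.
  rewrite -e1 -e2 in key'.
  have : ((b - n) * (c - n - (c' - n)) = 0)%Z by lia.
  case/Z.mul_eq_0 => h; lia.
subst c'.
have e4 : d = d' by lia.
have e5 : b = b' by lia.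
by subst.
Qed.

Lemma size_length (T : Type) (s : list T) : size s = length s.
Proof. by elim: s => //= a s ->. Qed.

Lemma map_in (f : quad -> nat * nat) s p : p \in map f s -> exists v, In v s /\ p = f v.
Proof.
elim: s => [|a s IH] //=; rewrite inE => /orP[/eqP ->|h].
  by exists a; split => //; left.
by have [v [vs ->]] := IH h; exists v; split => //; right.
Qed.

Lemma uniq_map_nodup (f : quad -> nat * nat) s : NoDup s ->
  (forall u v, In u s -> In v s -> f u = f v -> u = v) -> uniq (map f s).
Proof.
elim: s => [|a s IH] //= nd H.
inversion nd as [|a' s' na nd']; subst.
apply/andP; split.
  apply/negP => /map_in [v [vs e]].
  have := H a v (or_introl erefl) (or_intror vs) e => av; subst v; exact: na vs.
apply: IH => // u v us vs; apply: H; by right.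
Qed.

Lemma powE m k : Nat.pow m k = m ^ k.
Proof. by elim: k => //= k ->; rewrite expnS. Qed.

Lemma main_count (m n : Z) (s : list quad) : (3 <= n)%Z -> (Z.abs m < n * n)%Z ->
  NoDup s -> (forall v, In v s -> counted_root m n v) ->
  let X := 2 * Z.to_nat n in let l := (Nat.log2 X).+1 in
  let F := 4 * Z.to_nat (n * n - m) in let J := (Nat.log2 (Nat.log2 F).+1).+1 in
  (INR (length s) <= INR X * INR l * (2 * exp 2 * exp 1 * INR J ^ 2))%R.
Proof.
move=> n3 hm nd Hs X l F J.
have n0 : (0 < n)%Z by lia.
set E := Z.to_nat (n * n - m).
have E0 : 0 < E by rewrite /E; lia.
rewrite -size_length -(size_map (fq n)).
apply: (@count_real E _ X l J) => //.
- apply: uniq_map_nodup => // u v us vs e; exact: (@fq_inj m n u v (Hs u us) (Hs v vs) hm n0 e).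
- apply/allP => p /map_in [v [vs ->]]; exact: (proj1 (@fq_root m n v (Hs v vs) hm n0)).
- apply/allP => p /map_in [v [vs ->]]; exact: (proj2 (@fq_root m n v (Hs v vs) hm n0)).
- have X0 : (0 < X)%coq_nat by rewrite /X; lia.
  have [_ h] := Nat.log2_spec X X0; rewrite powE in h; apply/ltP; exact: h.
- have F0 : (0 < F)%coq_nat by rewrite /F; lia.
  have [_ h1] := Nat.log2_spec F F0; rewrite powE in h1.
  have u0 : (0 < (Nat.log2 F).+1)%coq_nat by lia.
  have [_ h2] := Nat.log2_spec _ u0; rewrite powE in h2.
  have h1' : F < 2 ^ (Nat.log2 F).+1 by apply/ltP.
  have h2' : (Nat.log2 F).+1 < 2 ^ J by apply/ltP.
  apply: (leq_trans h1'); rewrite leq_exp2l //.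
  exact: ltnW.
Qed.

Open Scope R_scope.

Lemma ln_le' x y : 0 < x -> x <= y -> ln x <= ln y.
Proof. move=> x0 [h|->]; [left; exact: ln_increasing | right; reflexivity]. Qed.

Lemma ln2_lt1 : ln 2 < 1.
Proof.
rewrite -[X in _ < X](ln_exp 1); apply: ln_increasing; first lra.
have := exp_ineq1 1 ltac:(lra); lra.
Qed.

Lemma ln_ge_1m x : 0 < x -> 1 - / x <= ln x.
Proof.
move=> x0.
have h := exp_ineq1_le (- ln x).
rewrite exp_Ropp exp_ln // in h; lra.
Qed.

Lemma exp_le_inv x : 0 <= x < 1 -> exp x <= / (1 - x).
Proof.
move=> hx.
have h := exp_ineq1_le (- x).
rewrite exp_Ropp in h.
have e0 := exp_pos x.
have h2 : 1 - x <= / exp x by lra.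
have := Rinv_le_contravar (1 - x) (/ exp x) ltac:(lra) h2.
by rewrite Rinv_inv.
Qed.

Lemma ln3 : 101 / 100 <= ln 3.
Proof.
rewrite -(ln_exp (101/100)); apply: ln_le'; first exact: exp_pos.
have e := exp_le_inv (101/800) ltac:(lra).
have -> : 101 / 100 = 101/800 + 101/800 + 101/800 + 101/800 + 101/800 + 101/800 + 101/800 + 101/800 by field.
rewrite !exp_plus.
have p := exp_pos (101/800).
have e' : exp (101/800) <= 800 / 699 by apply: Rle_trans e _; right; field.
clear e; rename e' into e.
set y := exp (101/800) in e p *.
have h : y * y * y * y * y * y * y * y <= (800/699) * (800/699) * (800/699) * (800/699) * (800/699) * (800/699) * (800/699) * (800/699).
  repeat apply: Rmult_le_compat; try lra; repeat apply: Rmult_le_pos; lra.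
apply: Rle_trans h _.
lra.
Qed.

Lemma log2_ln (y : nat) : (0 < y)%coq_nat -> INR (Nat.log2 y) <= 2 * ln (INR y).
Proof.
move=> y0.
have [h _] := Nat.log2_spec y y0.
have h1 : INR (Nat.pow 2 (Nat.log2 y)) <= INR y by apply: le_INR.
rewrite pow_INR in h1.
have p0 : 0 < INR 2 ^ Nat.log2 y by apply: pow_lt; simpl; lra.
have h2 := @ln_le' _ _ p0 h1.
rewrite ln_pow in h2; last by simpl; lra.
have l2 := ln_lt_2.
have : INR 2 = 2 by simpl; lra.
move=> e2; rewrite e2 in h2.
have k0 := pos_INR (Nat.log2 y).
nra.
Qed.

Lemma ln8 : ln 8 <= 3.
Proof.
have -> : 8 = 2 * 2 * 2 by lra.
rewrite !ln_mult; try lra.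
have := ln2_lt1; lra.
Qed.

Lemma ln11 : ln 11 <= 4.
Proof.
apply: Rle_trans (_ : ln 16 <= 4).
  apply: ln_le'; lra.
have -> : 16 = 2 * 2 * 2 * 2 by lra.
rewrite !ln_mult; try lra.
have := ln2_lt1; lra.
Qed.

Theorem theorem4p2 :
  exists C : R, forall m n : Z, (3 <= n)%Z -> sqrt (IZR (Z.abs m)) < IZR n ->
    forall s : list quad, NoDup s -> (forall v, In v s -> counted_root m n v) ->
      INR (length s) <= C * IZR n * ln (IZR n) * (ln (ln (IZR n)))^2.
Proof.
exists (20 * exp 2 * exp 1 * 911 ^ 2).
move=> m n n3 hsq s nd Hs.
have hm : (Z.abs m < n * n)%Z.
  case: (Z.lt_ge_cases (Z.abs m) (n * n)) => // h; exfalso.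
  have h1 : IZR (n * n) <= IZR (Z.abs m) by apply: IZR_le.
  have := sqrt_le_1_alt _ _ h1.
  rewrite mult_IZR sqrt_square; last by apply: IZR_le; lia.
  lra.
have main := @main_count m n s n3 hm nd Hs.
cbv zeta in main.
set N := IZR n.
have N3 : 3 <= N by apply: IZR_le.
have lnN : 101/100 <= ln N by apply: Rle_trans ln3 _; apply: ln_le'; lra.
have lnlnN : 1/101 <= ln (ln N).
  apply: Rle_trans (_ : ln (101/100) <= _); last by apply: ln_le'; lra.
  have := ln_ge_1m (101/100) ltac:(lra).
  have -> : 1 - / (101/100) = 1/101 by field.
  done.
have hX : INR (2 * Z.to_nat n) = 2 * N.
  rewrite -multE mult_INR (INR_IZR_INZ (Z.to_nat n)) Z2Nat.id; last lia.
  by rewrite /N; simpl; lra.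
have hl : INR (Nat.log2 (2 * Z.to_nat n)).+1 <= 5 * ln N.
  rewrite S_INR.
  have X0 : (0 < 2 * Z.to_nat n)%coq_nat by lia.
  have := @log2_ln _ X0; rewrite hX ln_mult; try lra.
  have := ln2_lt1. lra.
set F := (4 * Z.to_nat (n * n - m))%nat in main.
have F0 : (0 < F)%coq_nat by rewrite /F; lia.
have hF : INR F <= 8 * (N * N).
  rewrite /F -multE mult_INR (INR_IZR_INZ (Z.to_nat _)) Z2Nat.id; last lia.
  have : IZR (n * n - m) <= 2 * (N * N).
    rewrite /N -mult_IZR -(mult_IZR 2); apply: IZR_le; lia.
  simpl; lra.
have Fpos : 0 < INR F by apply: lt_0_INR.
have hlnF : ln (INR F) <= 3 + 2 * ln N.
  apply: Rle_trans (_ : ln (8 * (N * N)) <= _); first by apply: ln_le'.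
  rewrite (ln_mult 8 (N * N)); try nra.
  rewrite (ln_mult N N); try lra.
  have := ln8; lra.
have u0 : (0 < (Nat.log2 F).+1)%coq_nat by lia.
have hu : INR (Nat.log2 F).+1 <= 11 * ln N.
  rewrite S_INR; have := @log2_ln _ F0; lra.
have upos : 0 < INR (Nat.log2 F).+1 by apply: lt_0_INR.
have hlnu : ln (INR (Nat.log2 F).+1) <= 4 + ln (ln N).
  apply: Rle_trans (_ : ln (11 * ln N) <= _); first by apply: ln_le'.
  rewrite ln_mult; try lra.
  have := ln11; lra.
have hJ : INR (Nat.log2 (Nat.log2 F).+1).+1 <= 911 * ln (ln N).
  rewrite S_INR; have := @log2_ln _ u0; lra.
set J := INR (Nat.log2 (Nat.log2 F).+1).+1 in main hJ.
set L := INR (Nat.log2 (2 * Z.to_nat n)).+1 in main hl.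
rewrite hX in main.
apply: Rle_trans main _.
have J0 : 0 <= J by apply: pos_INR.
have L0 : 0 <= L by apply: pos_INR.
have K0 : 0 < 2 * exp 2 * exp 1 by have := exp_pos 2; have := exp_pos 1; nra.
have J2 : J ^ 2 <= (911 * ln (ln N)) ^ 2 by apply: pow_incr.
have step1 : 2 * N * L <= 2 * N * (5 * ln N) by apply: Rmult_le_compat_l; lra.
have step2 : 2 * exp 2 * exp 1 * J ^ 2 <= 2 * exp 2 * exp 1 * (911 * ln (ln N)) ^ 2.
  by apply: Rmult_le_compat_l; lra.
have nl0 : 0 <= 2 * N * L by apply: Rmult_le_pos; lra.
have j0 : 0 <= 2 * exp 2 * exp 1 * J ^ 2 by apply: Rmult_le_pos; [lra | apply: pow_le].
apply: Rle_trans (Rmult_le_compat _ _ _ _ nl0 j0 step1 step2) _.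
right; ring.
Qed.
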